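(* Let $f:R\to S$ be a ring morphism. (1) If $R$ is quasi-Prüferian and $f$ is either an integral morphism or a flat epimorphism, then $S$ is quasi-Prüferian. (2) If $S$ is quasi-Prüferian and $f$ is injective and integral, then $R$ is quasi-Prüferian. (3) If $R$ is quasi-Prüferian and $f$ is a quasi-Prüfer extension, then $S$ is quasi-Prüferian.
   Context: All rings are commutative with identity. For a ring $A$, $A(X):=A[X]_{\Sigma_A}$ with $\Sigma_A=\{p\in A[X]: \text{the coefficients of } p \text{ generate } A\}$. A ring $A$ is quasi-Prüferian if the induced map $\mathrm{Spec}(A(X))\to\mathrm{Spec}(A)$ is injective (equivalently, every prime ideal $Q$ of $A[X]$ contained in $M[X]$ for some maximal ideal $M$ of $A$ equals $(Q\cap A)[X]$). An extension $A\subseteq B$ is Prüfer if $A\subseteq C$ is a flat epimorphism for each intermediate ring $C$, and quasi-Prüfer if it factors as $A\subseteq A'\subseteq B$ with $A\subseteq A'$ integral and $A'\subseteq B$ Prüfer. *)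

(* Defs.v *)
From HB Require Import structures.
From mathcomp Require Import all_boot all_order all_algebra.
Set Implicit Arguments. Unset Strict Implicit. Unset Printing Implicit Defensive.
Import GRing.Theory.
Local Open Scope ring_scope.

Definition is_ideal (A : comPzRingType) (I : A -> Prop) : Prop :=
  I 0 /\ (forall x y, I x -> I y -> I (x + y)) /\ (forall r x, I x -> I (r * x)).

Definition is_prime_ideal (A : comPzRingType) (I : A -> Prop) : Prop :=
  is_ideal I /\ ~ I 1 /\ (forall x y, I (x * y) -> I x \/ I y).

Definition in_Sigma (A : comNzRingType) (p : {poly A}) : Prop :=
  exists c : nat -> A, \sum_(i < size p) c i * p`_i = 1.

(* Prime ideals of A(X) = A[X]_{Sigma_A} are identified (standard
   correspondence for localizations) with the prime ideals Q of A[X] with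
   Q disjoint from Sigma_A; the map Spec(A(X)) -> Spec(A) is Q |-> Q /\ A
   (contraction along A -> A[X]).  A is quasi-Pruferian iff this map is
   injective. *)
Definition quasi_pruferian (A : comNzRingType) : Prop :=
  forall Q1 Q2 : {poly A} -> Prop,
    is_prime_ideal Q1 -> (forall p, in_Sigma p -> ~ Q1 p) ->
    is_prime_ideal Q2 -> (forall p, in_Sigma p -> ~ Q2 p) ->
    (forall a : A, Q1 a%:P <-> Q2 a%:P) ->
    forall p, Q1 p <-> Q2 p.

Definition is_subring (S : comPzRingType) (C : S -> Prop) : Prop :=
  C 1 /\ (forall x y, C x -> C y -> C (x - y)) /\ (forall x y, C x -> C y -> C (x * y)).

Definition rmorph_on (S T : comPzRingType) (C : S -> Prop) (g : S -> T) : Prop :=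
  g 1 = 1 /\ (forall x y, C x -> C y -> g (x + y) = g x + g y /\ g (x * y) = g x * g y).

(* Generalised setting: a ring map f restricted to a subring A of R, landing
   in a subring C of S (A -> C, a |-> f a).  For a global ring morphism take
   A, C the full rings; for an inclusion of subrings of S take f = id. *)

Definition integral_on (R S : comNzRingType) (f : R -> S) (A : R -> Prop) (C : S -> Prop) : Prop :=
  forall c, C c -> exists p : {poly R},
    p \is monic /\ (forall i, A p`_i) /\ root (map_poly f p) c.

(* C is a flat A-module (via f): equational criterion of flatness. *)
Definition flat_on (R S : comPzRingType) (f : R -> S) (A : R -> Prop) (C : S -> Prop) : Prop :=
  forall (n : nat) (a : 'I_n -> R) (x : 'I_n -> S),
    (forall i, A (a i)) -> (forall i, C (x i)) ->
    \sum_(i < n) f (a i) * x i = 0 ->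
    exists (m : nat) (b : 'I_n -> 'I_m -> R) (y : 'I_m -> S),
      (forall i j, A (b i j)) /\ (forall j, C (y j)) /\
      (forall i, x i = \sum_(j < m) f (b i j) * y j) /\
      (forall j, \sum_(i < n) a i * b i j = 0).

Definition epi_on (R S : comPzRingType) (f : R -> S) (A : R -> Prop) (C : S -> Prop) : Prop :=
  forall (T : comPzRingType) (g h : S -> T),
    rmorph_on C g -> rmorph_on C h ->
    (forall a, A a -> g (f a) = h (f a)) ->
    forall c, C c -> g c = h c.

Definition flat_epi_on (R S : comPzRingType) (f : R -> S) (A : R -> Prop) (C : S -> Prop) : Prop :=
  flat_on f A C /\ epi_on f A C.

Definition fullset (T : Type) : T -> Prop := fun _ => True.

Definition integral_morphism (R S : comNzRingType) (f : {rmorphism R -> S}) : Prop :=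
  integral_on f (@fullset R) (@fullset S).

Definition flat_epimorphism (R S : comNzRingType) (f : {rmorphism R -> S}) : Prop :=
  flat_epi_on f (@fullset R) (@fullset S).

Definition prufer_sub (S : comNzRingType) (A' : S -> Prop) : Prop :=
  forall C : S -> Prop, is_subring C -> (forall x, A' x -> C x) ->
    flat_epi_on id A' C.

Definition quasi_prufer_ext (R S : comNzRingType) (f : {rmorphism R -> S}) : Prop :=
  injective f /\
  exists A' : S -> Prop,
    is_subring A' /\ (forall r, A' (f r)) /\
    integral_on f (@fullset R) A' /\ prufer_sub A'.

(* Main.v *)
From HB Require Import structures.
Require Import Defs.
From mathcomp Require Import all_boot all_order all_algebra.
From mathcomp Require Import boolp classical_sets.
From mathcomp Require Import zify ring.
Set Implicit Arguments. Unset Strict Implicit. Unset Printing Implicit Defensive.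
Import GRing.Theory.
Local Open Scope ring_scope.

Section Basics.
Variable A : comNzRingType.

Lemma ideal_sum (I : A -> Prop) (J : Type) (r : seq J) (P : pred J) (F : J -> A) :
  is_ideal I -> (forall j, P j -> I (F j)) -> I (\sum_(j <- r | P j) F j).
Proof.
move=> [I0 [ID IM]] HF; elim/big_rec: _ => //= j x Pj Ix; exact: ID (HF _ Pj) Ix.
Qed.

Lemma idealN (I : A -> Prop) x : is_ideal I -> I x -> I (- x).
Proof. by move=> [_ [_ IM]] Ix; rewrite -mulN1r; apply: IM. Qed.

Lemma idealB (I : A -> Prop) x y : is_ideal I -> I x -> I y -> I (x - y).
Proof. by move=> hI Ix Iy; case: (hI) => _ [ID _]; apply: ID => //; apply: idealN. Qed.

Lemma idealMr (I : A -> Prop) x y : is_ideal I -> I x -> I (x * y).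
Proof. by move=> [_ [_ IM]] Ix; rewrite mulrC; apply: IM. Qed.

Lemma ideal_eq (I : A -> Prop) x y : is_ideal I -> I (x - y) -> I y -> I x.
Proof. by move=> hI h1 h2; rewrite -(subrK y x); case: hI => _ [ID _]; apply: ID. Qed.

Lemma prime_expn (P : A -> Prop) x n : is_prime_ideal P -> P (x ^+ n) -> P x.
Proof.
move=> [hI [P1 Pm]]; elim: n => [|n IH]; first by rewrite expr0.
by rewrite exprS => /Pm [] // /IH.
Qed.

End Basics.

Section PolyBasics.
Variable A : comNzRingType.
Definition PX (P : A -> Prop) : {poly A} -> Prop := fun g => forall i, P g`_i.

Lemma PX_ideal P : is_ideal P -> is_ideal (PX P).
Proof.
move=> hP; case: (hP) => [P0 [PD PM]]; split; first by move=> i; rewrite coef0.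
split; first by move=> x y hx hy i; rewrite coefD; apply: PD.
move=> r x hx i; rewrite coefM; apply: ideal_sum => // j _; exact: PM.
Qed.

Lemma PX_prime P : is_prime_ideal P -> is_prime_ideal (PX P).
Proof.
move=> hP; case: (hP) => [hI [P1 Pm]]; split; first exact: PX_ideal.
split; first by move=> /(_ 0%N); rewrite coefC.
move=> f g hfg.
case: (pselect (PX P f)) => [|nf]; first by left.
case: (pselect (PX P g)) => [|ng]; first by right.
exfalso.
have exf : exists i, ~~ `[< P f`_i >].
  apply: contrapT => hn; apply: nf => i0.
  apply: contrapT => hi; apply: hn; exists i0; exact/asboolPn.
have exg : exists i, ~~ `[< P g`_i >].
  apply: contrapT => hn; apply: ng => i0.
  apply: contrapT => hi; apply: hn; exists i0; exact/asboolPn.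
case: (ex_minnP exf) => i /asboolPn Hi mini.
case: (ex_minnP exg) => j /asboolPn Hj minj.
have Pf k : (k < i)%N -> P f`_k.
  move=> lt; apply: contrapT => hk.
  by have := mini k (introT (asboolPn _) hk); rewrite leqNgt lt.
have Pg k : (k < j)%N -> P g`_k.
  move=> lt; apply: contrapT => hk.
  by have := minj k (introT (asboolPn _) hk); rewrite leqNgt lt.
have := hfg (i + j)%N; rewrite coefM.
have lti : (i < (i + j).+1)%N by rewrite ltnS leq_addr.
rewrite (bigD1 (Ordinal lti)) //= addKn => h.
have hrest : P (\sum_(k < (i + j).+1 | k != Ordinal lti) f`_k * g`_(i + j - k)).
  apply: ideal_sum => // k hk.
  case: (ltngtP k i) => [lt|gt|eq].
  - by apply: idealMr => //; apply: Pf.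
  - case: hI => _ [_ IM]; apply: IM; apply: Pg.
    move: gt (ltn_ord k); lia.
  - by move: hk; rewrite -(inj_eq val_inj) /= eq eqxx.
have : P (f`_i * g`_j).
  by rewrite -(addrK (\sum_(k < (i + j).+1 | k != Ordinal lti) f`_k * g`_(i + j - k)) (f`_i * g`_j)); exact: idealB.
by case/Pm.
Qed.

Lemma PX_C (P : A -> Prop) a : is_ideal P -> PX P a%:P <-> P a.
Proof.
move=> [P0 _]; split; first by move=> /(_ 0%N); rewrite coefC.
by move=> Pa i; rewrite coefC; case: eqP.
Qed.

Lemma poly_sumC (g : {poly A}) : g = \sum_(i < size g) (g`_i)%:P * 'X^i.
Proof.
by rewrite -{1}[g]coefK poly_def; apply: eq_bigr => i _; rewrite mul_polyC.
Qed.

Lemma PX_sub (P : A -> Prop) (Q : {poly A} -> Prop) :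
  is_ideal Q -> (forall a, P a -> Q a%:P) -> forall g, PX P g -> Q g.
Proof.
move=> hQ hPQ g hg; rewrite (poly_sumC g); apply: ideal_sum => // i _.
by apply: idealMr => //; apply: hPQ.
Qed.

Lemma sum_widen (c : nat -> A) (p : {poly A}) n : (size p <= n)%N ->
  \sum_(i < n) c i * p`_i = \sum_(i < size p) c i * p`_i.
Proof.
move=> le; rewrite -!(big_mkord xpredT (fun i => c i * p`_i)).
rewrite (big_cat_nat (n:=size p)) ?leq0n //= [X in _ + X]big1_seq ?addr0 //.
move=> i /andP[_]; rewrite mem_index_iota => /andP[h _].
by rewrite nth_default ?mulr0.
Qed.

Lemma in_SigmaP (p : {poly A}) :
  in_Sigma p <-> exists n (c : nat -> A), \sum_(i < n) c i * p`_i = 1.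
Proof.
split; first by move=> [c h]; exists (size p), c.
move=> [n [c h]]; exists (fun i => if (i < n)%N then c i else 0).
rewrite -(sum_widen (fun i => if (i < n)%N then c i else 0) (leq_maxr n (size p))) -h.
rewrite -(big_mkord xpredT (fun i => (if (i < n)%N then c i else 0) * p`_i)) -(big_mkord xpredT (fun i => c i * p`_i)) (big_cat_nat (n:=n)) ?leq0n ?leq_maxl /=.
rewrite [X in _ + X]big1_seq ?addr0.
  by apply: eq_big_seq => i; rewrite mem_index_iota => /andP[_ ->].
by move=> i /andP[_]; rewrite mem_index_iota => /andP[]; rewrite leqNgt => /negbTE -> _; rewrite mul0r.
all: by [].
Qed.

Lemma PX_Sigma (P : A -> Prop) p : is_prime_ideal P -> PX P p -> ~ in_Sigma p.
Proof.
move=> [hI [P1 _]] hp [c h]; apply: P1; rewrite -h; apply: ideal_sum => // i _.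
case: hI => _ [_ IM]; exact: IM.
Qed.

End PolyBasics.

Definition QP (A : comNzRingType) := forall Q : {poly A} -> Prop,
  is_prime_ideal Q -> (forall p, in_Sigma p -> ~ Q p) ->
  forall g, Q g -> forall i, Q (g`_i)%:P.

Lemma contr_prime (A B : comNzRingType) (phi : {rmorphism A -> B}) (Q : B -> Prop) :
  is_prime_ideal Q -> is_prime_ideal (fun a => Q (phi a)).
Proof.
move=> [[Q0 [QD QM]] [Q1 Qp]]; split; last split.
- split; first by rewrite rmorph0.
  split; first by move=> x y hx hy; rewrite rmorphD; apply: QD.
  by move=> r x hx; rewrite rmorphM; apply: QM.
- by rewrite rmorph1.
- by move=> x y; rewrite rmorphM => /Qp.
Qed.

Lemma qpP (A : comNzRingType) : quasi_pruferian A <-> QP A.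
Proof.
split.
- move=> hq Q hQ hS g hg i.
  pose P := fun a : A => Q a%:P.
  have hP : is_prime_ideal P by apply: (contr_prime (polyC : {rmorphism A -> {poly A}})).
  have hPX := PX_prime hP.
  have := (hq Q (PX P) hQ hS hPX (fun p hp => PX_Sigma hP^~ hp)).
  have e : forall a, Q a%:P <-> PX P a%:P.
    by move=> a; rewrite PX_C //; case: hP.
  by move=> /(_ e g) [/(_ hg) /(_ i)].
- move=> hq Q1 Q2 hQ1 hS1 hQ2 hS2 e p.
  have hI1 : is_ideal Q1 by case: hQ1.
  have hI2 : is_ideal Q2 by case: hQ2.
  split=> hp.
  + apply: (PX_sub (P := fun a => Q1 a%:P)) => //; first by move=> a /e.
    by move=> i; apply: hq.
  + apply: (PX_sub (P := fun a => Q2 a%:P)) => //; first by move=> a /e.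
    by move=> i; apply: hq.
Qed.

Lemma Sigma_map (R S : comNzRingType) (f : {rmorphism R -> S}) p :
  in_Sigma p -> in_Sigma (map_poly f p).
Proof.
move=> [c h]; apply/in_SigmaP; exists (size p), (fun i => f (c i)).
rewrite -(rmorph1 f) -h rmorph_sum; apply: eq_bigr => i _.
by rewrite coef_map rmorphM.
Qed.

Lemma integral_polyC (R S : comNzRingType) (f : {rmorphism R -> S}) s :
  integralOver f s -> integralOver (map_poly f) s%:P.
Proof.
case=> p mp hr; exists (map_poly polyC p).
  exact: monic_map.
rewrite -map_poly_comp.
have -> : map_poly (map_poly f \o polyC) p = map_poly polyC (map_poly f p).
  by rewrite -map_poly_comp; apply: eq_map_poly => x /=; rewrite map_polyC.
by rewrite /root horner_map (eqP hr).
Qed.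

Lemma poly_integral (R S : comNzRingType) (f : {rmorphism R -> S}) (g : {poly S}) :
  (forall i, integralOver f g`_i) -> integralOver (map_poly f) g.
Proof.
move=> hi; rewrite (poly_sumC g).
apply: (big_ind (integralOver (map_poly f))); first exact: integral0.
  by move=> x y; apply: integral_add.
move=> i _; apply: integral_mul; first exact: integral_polyC.
by rewrite -(map_polyXn f); apply: integral_id.
Qed.

Lemma incomp (A B : comNzRingType) (phi : {rmorphism A -> B}) (I0 Q : B -> Prop) b :
  is_prime_ideal I0 -> is_ideal Q -> (forall x, I0 x -> Q x) ->
  (forall a, Q (phi a) -> I0 (phi a)) -> integralOver phi b -> Q b -> I0 b.
Proof.
move=> hI0 hQ sub hc [p mp hr] Qb; apply: contrapT => nb.
case: (hI0) => [hI [I1 Ip]].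
have claim : forall n (a : nat -> A), I0 (b ^+ n + \sum_(i < n) phi (a i) * b ^+ i) -> False.
  elim=> [|n IH] a; first by rewrite big_ord0 addr0 expr0.
  rewrite big_ord_recl /= expr0 mulr1.
  set r := b ^+ n + \sum_(i < n) phi (a (bump 0 i)) * b ^+ i.
  have er : b ^+ n.+1 + (phi (a 0%N) + \sum_(i < n) phi (a (bump 0 i)) * b ^+ (bump 0 i))
      = phi (a 0%N) + b * r.
    rewrite /r mulrDr mulr_sumr exprS addrCA; congr (_ + (_ + _)).
    by apply: eq_bigr => i _; rewrite /bump /= add1n exprS mulrCA.
  rewrite er => he.
  have Qa : Q (phi (a 0%N)).
    rewrite -(addrK (b * r) (phi (a 0%N))); apply: idealB => //; first exact: sub.
    exact: idealMr hQ Qb.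
  have Ia := hc _ Qa.
  have Ibr : I0 (b * r).
    have -> : b * r = (phi (a 0%N) + b * r) - phi (a 0%N) by rewrite [phi _ + _]addrC addrK.
    exact: idealB.
  case: (Ip _ _ Ibr) => // Ir; exact: (IH (fun i => a i.+1)).
have mq : map_poly phi p \is monic by exact: monic_map.
apply: (claim (size (map_poly phi p)).-1 (fun i => p`_i)).
move: hr; rewrite /root horner_coef => /eqP.
rewrite (polySpred (monic_neq0 mq)) big_ord_recr /= -lead_coefE (eqP mq) mul1r.
under eq_bigr do rewrite coef_map.
move=> e; rewrite addrC e; by case: hI.
Qed.

Lemma integral_of (R S : comNzRingType) (f : {rmorphism R -> S}) (A : R -> Prop) c :
  (exists p : {poly R}, p \is monic /\ (forall i, A p`_i) /\ root (map_poly f p) c) ->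
  integralOver f c.
Proof. by move=> [p [mp [_ hr]]]; exists p. Qed.

Lemma contr_Sigma (R S : comNzRingType) (f : {rmorphism R -> S}) (Q : {poly S} -> Prop) :
  (forall p, in_Sigma p -> ~ Q p) -> forall p, in_Sigma p -> ~ Q (map_poly f p).
Proof. by move=> h p /(Sigma_map f); apply: h. Qed.

Lemma part1_int (R S : comNzRingType) (f : {rmorphism R -> S}) :
  QP R -> integral_morphism f -> QP S.
Proof.
move=> hR hint Q1 hQ1 hS g hg i.
pose phi := map_poly f : {poly R} -> {poly S}.
have hq := contr_prime (map_poly f) hQ1.
have hR' := hR _ hq (contr_Sigma hS).
pose P' := fun s : S => Q1 s%:P.
have hP' : is_prime_ideal P' by apply: (contr_prime (polyC : {rmorphism S -> {poly S}})).
have hI1 : is_ideal Q1 by case: hQ1.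
suff : PX P' g by apply.
apply: (incomp (phi := map_poly f) (Q := Q1)) => //.
- exact: PX_prime.
- by apply: PX_sub.
- move=> a ha j; rewrite /P' coef_map -map_polyC; exact: hR'.
- apply: poly_integral => j; apply: (integral_of (A := @fullset R)); exact: hint.
Qed.

Lemma zorn_max (T : Type) (P : (T -> Prop) -> Prop) (W0 : T -> Prop) :
  (exists x, W0 x) -> P W0 ->
  (forall F : (T -> Prop) -> Prop,
     (forall X, F X -> P X /\ (forall x, W0 x -> X x)) -> (exists X, F X) ->
     (forall X Y, F X -> F Y -> (forall x, X x -> Y x) \/ (forall x, Y x -> X x)) ->
     P (fun x => exists X, F X /\ X x)) ->
  exists A, P A /\ (forall x, W0 x -> A x) /\
    (forall B, P B -> (forall x, A x -> B x) -> forall x, B x -> A x).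
Proof.
move=> [x0 Wx0] PW0 hch.
pose P' : set (set T) := fun X => X = set0 \/ (P X /\ (forall x, W0 x -> X x)).
have [] := @Zorn_bigcup T P'.
  move=> F FP Ftot.
  case: (pselect (exists X, F X /\ exists x, X x)) => [[X0 [FX0 [x Xx]]]|hne].
  - right.
    pose F' := fun X => F X /\ P X /\ (forall x, W0 x -> X x).
    have e : bigcup F (fun X => X) = (fun x => exists X, F' X /\ X x).
      apply: funext => y; apply: propext; split.
      + move=> [X FX Xy]; exists X; split => //; split => //.
        case: (FP X FX) => // eX; rewrite eX in Xy; done.
      + by move=> [X [[FX _] Xy]]; exists X.
    have F'X0 : F' X0.
      split => //; case: (FP X0 FX0) => // eX; by rewrite eX in Xx.
    rewrite e; split.
    + apply: hch.
      * by move=> X [_ h].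
      * by exists X0.
      * by move=> X Y [FX _] [FY _]; apply: Ftot.
    + by move=> z Wz; exists X0; split => //; case: F'X0 => _ [_ h]; apply: h.
  - left; apply: funext => y; apply: propext; split => //.
    move=> [X FX Xy]; apply: hne; exists X; split => //; by exists y.
move=> A [[eA|[PA WA]] maxA].
  exfalso; apply: (maxA W0); last by right.
  rewrite eA; split => //; move=> /(_ x0 Wx0); done.
exists A; split => //; split => // B PB AB x Bx.
apply: contrapT => nAx; apply: (maxA B); last by right; split => // y /WA /AB.
split => // hBA; exact: nAx (hBA x Bx).
Qed.

Lemma prime_avoid (B : comNzRingType) (J U : B -> Prop) :
  is_ideal J -> U 1 -> (forall x y, U x -> U y -> U (x * y)) ->
  (forall x, J x -> ~ U x) ->
  exists Q, is_prime_ideal Q /\ (forall x, J x -> Q x) /\ (forall x, Q x -> ~ U x) /\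
    (forall x, ~ Q x -> exists q b, Q q /\ U (q + b * x)).
Proof.
move=> hJ U1 UM JU.
pose P := fun W : B -> Prop => is_ideal W /\ (forall x, W x -> ~ U x).
have [] := @zorn_max B P J.
- by exists 0; case: hJ.
- by split.
- move=> F FP [X0 FX0] Ftot; split; last by move=> x [X [FX Xx]]; case: (FP X FX) => [[_ h] _]; apply: h.
  split; first by exists X0; split => //; case: (FP X0 FX0) => [[[h _] _] _].
  split.
    move=> x y [X [FX Xx]] [Y [FY Yy]].
    case: (Ftot X Y FX FY) => sub.
    + exists Y; split => //; case: (FP Y FY) => [[[_ [hD _]] _] _]; apply: hD => //; exact: sub.
    + exists X; split => //; case: (FP X FX) => [[[_ [hD _]] _] _]; apply: hD => //; exact: sub.
  move=> r x [X [FX Xx]]; exists X; split => //.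
  by case: (FP X FX) => [[[_ [_ hM]] _] _]; apply: hM.
move=> Q [[hQ QU] [JQ maxQ]].
have hmax : forall x, ~ Q x -> exists q b, Q q /\ U (q + b * x).
  move=> x nQx; apply: contrapT => hn.
  pose W := fun y => exists q b, Q q /\ y = q + b * x.
  have hW : P W.
    split.
    + split; first by exists 0, 0; split; [case: hQ|rewrite mul0r addr0].
      split.
      * move=> y z [q1 [b1 [Q1 ->]]] [q2 [b2 [Q2 ->]]]; exists (q1 + q2), (b1 + b2); split.
          by case: hQ => _ [hD _]; apply: hD.
        by rewrite mulrDl addrACA.
      * move=> r y [q [b [Qq ->]]]; exists (r * q), (r * b); split.
          by case: hQ => _ [_ hM]; apply: hM.
        by rewrite mulrDr mulrA.
    + move=> y [q [b [Qq ->]]] Uy; apply: hn; by exists q, b.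
  apply: nQx; apply: (maxQ W hW); last by exists 0, 1; split; [case: hQ|rewrite add0r mul1r].
  by move=> y Qy; exists y, 0; split => //; rewrite mul0r addr0.
exists Q; split; last by split.
split => //; split; first by move=> /QU; apply.
move=> x y Qxy.
case: (pselect (Q x)) => [|nx]; first by left.
case: (pselect (Q y)) => [|ny]; first by right.
exfalso.
have [q1 [b1 [Q1 U1']]] := hmax x nx.
have [q2 [b2 [Q2 U2']]] := hmax y ny.
apply: (QU _ _ (UM _ _ U1' U2')).
have -> : (q1 + b1 * x) * (q2 + b2 * y) =
   q1 * (q2 + b2 * y) + (q2 * (b1 * x) + (b1 * b2) * (x * y)).
  by rewrite mulrDl [X in _ + X]mulrDr; congr (_ + (_ + _)); [rewrite mulrC | rewrite mulrACA].
case: hQ => _ [hD hM].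
apply: (hD); first by rewrite mulrC; apply: (hM).
by apply: (hD); [rewrite mulrC; apply: (hM) | apply: (hM)].
Qed.

Lemma pow_diff (B : comNzRingType) (Q : B -> Prop) x y i :
  is_ideal Q -> Q (x - y) -> Q (x ^+ i - y ^+ i).
Proof.
move=> hQ hxy; elim: i => [|i IH]; first by rewrite !expr0 subrr; case: hQ.
have -> : x ^+ i.+1 - y ^+ i.+1 = x * (x ^+ i - y ^+ i) + (x - y) * y ^+ i.
  by rewrite mulrBr mulrBl addrA subrK !exprS.
case: (hQ) => _ [hD hM]; apply: hD; first exact: hM.
exact: idealMr.
Qed.

Lemma lying_over (A B : comNzRingType) (phi : {rmorphism A -> B})
    (J : B -> Prop) (p : A -> Prop) :
  (forall b, integralOver phi b) -> is_ideal J -> is_prime_ideal p ->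
  (forall a, J (phi a) -> p a) ->
  exists Q, is_prime_ideal Q /\ (forall x, J x -> Q x) /\ (forall a, Q (phi a) <-> p a).
Proof.
move=> hint hJ hp Jp.
case: (hp) => [hpI [p1 pm]].
pose U := fun y => exists a, ~ p a /\ y = phi a.
have U1 : U 1 by exists 1; split => //; rewrite rmorph1.
have UM : forall x y, U x -> U y -> U (x * y).
  move=> x y [a [na ->]] [b [nb ->]]; exists (a * b); split; last by rewrite rmorphM.
  by case/pm.
have JU : forall x, J x -> ~ U x.
  by move=> x Jx [a [na ea]]; apply: na; apply: Jp; rewrite -ea.
have [Q [hQ [JQ [QU hmax]]]] := @prime_avoid B J U hJ U1 UM JU.
have fwd : forall a, Q (phi a) -> p a.
  move=> a Qa; apply: contrapT => na; apply: (QU _ Qa); by exists a.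
exists Q; split => //; split => // a; split; first exact: fwd.
move=> pa; apply: contrapT => nQ.
have [q [c [Qq [s [ns es]]]]] := hmax _ nQ.
have [pc mpc hr] := hint c.
pose qc := map_poly phi pc.
have szq : size qc = size pc.
  by rewrite /qc size_map_poly_id0 // (eqP mpc) rmorph1 oner_neq0.
pose n := (size pc).-1.
have szn : size pc = n.+1 by rewrite /n (polySpred (monic_neq0 mpc)).
pose e i := pc`_i * a ^+ (n - i).
have hQ' : is_ideal Q by case: hQ.
have key : \sum_(i < n.+1) phi (e i) * (phi s - q) ^+ i = 0.
  have -> : phi s - q = c * phi a by rewrite -es addrC addKr.
  transitivity (phi a ^+ n * qc.[c]); last by rewrite (eqP hr) mulr0.
  rewrite horner_coef mulr_sumr szq szn; apply: eq_bigr => i _.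
  rewrite /e rmorphM rmorphXn coef_map exprMn.
  have le : (i <= n)%N by rewrite -ltnS.
  have -> : phi a ^+ n = phi a ^+ (n - i) * phi a ^+ i by rewrite -exprD subnK.
  ring.
have hsum : Q (phi (\sum_(i < n.+1) e i * s ^+ i)).
  have : Q (\sum_(i < n.+1) phi (e i) * phi s ^+ i - \sum_(i < n.+1) phi (e i) * (phi s - q) ^+ i).
    rewrite -sumrB; apply: ideal_sum => // i _; rewrite -mulrBr.
    rewrite mulrC; apply: idealMr => //; apply: pow_diff => //.
    by rewrite opprB addrC subrK.
  have -> : phi (\sum_(i < n.+1) e i * s ^+ i) = \sum_(i < n.+1) phi (e i) * phi s ^+ i.
    by rewrite rmorph_sum; apply: eq_bigr => i _; rewrite rmorphM rmorphXn.
  by rewrite key subr0.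
have := fwd _ hsum; rewrite big_ord_recr /=.
have -> : e n = 1 by rewrite /e subnn expr0 mulr1; exact: (eqP mpc).
rewrite mul1r => hps.
have hrest : p (\sum_(i < n) e i * s ^+ i).
  apply: ideal_sum => // i _; rewrite /e.
  have lt : (0 < n - i)%N by rewrite subn_gt0.
  rewrite -mulrA mulrC -mulrA; apply: idealMr => //.
  rewrite -(prednK lt) exprS; apply: idealMr => //.
apply: ns; apply: (prime_expn (n := n)) => //.
rewrite -(addKr (\sum_(i < n) e i * s ^+ i) (s ^+ n)); case: (hpI) => _ [hD _]; apply: hD => //; exact: idealN.
Qed.

Lemma sum_cond_widen (A : comNzRingType) (F : nat -> A) n m : (n <= m)%N ->
  \sum_(i < m) (if (i < n)%N then F i else 0) = \sum_(i < n) F i.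
Proof.
move=> le; by rewrite (big_ord_widen _ F le) [RHS]big_mkcond.
Qed.

Lemma content_prime (R : comNzRingType) (q : {poly R} -> Prop) :
  is_ideal q -> (forall p, in_Sigma p -> ~ q p) ->
  exists M, is_prime_ideal M /\ forall h, q h -> forall i, M h`_i.
Proof.
move=> hq hS.
pose I := fun r : R => exists h n (c : nat -> R), q h /\ r = \sum_(i < n) c i * h`_i.
have hI : is_ideal I.
  split; first by exists 0, 0%N, (fun _ => 0); split; [case: hq|rewrite big_ord0].
  split.
  - move=> x y [h1 [n1 [c1 [q1 ->]]]] [h2 [n2 [c2 [q2 ->]]]].
    pose m := maxn n1 (size h1).
    exists (h1 + 'X^m * h2), (m + n2)%N,
      (fun i => if (i < m)%N then (if (i < n1)%N then c1 i else 0) else c2 (i - m)%N).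
    split; first by case: hq => _ [hD hM]; apply: hD => //; apply: hM.
    rewrite big_split_ord /=; congr (_ + _).
    + rewrite -(sum_cond_widen (fun i => c1 i * h1`_i) (leq_maxl n1 (size h1))) -/m.
      apply: eq_bigr => i _; rewrite ltn_ord coefD coefXnM ltn_ord addr0.
      by case: ifP => _; rewrite ?mul0r.
    + apply: eq_bigr => i _.
      have h1z : h1`_(m + i) = 0.
        by rewrite nth_default // (leq_trans (leq_maxr n1 (size h1)) (leq_addr _ _)).
      by rewrite coefD coefXnM h1z add0r !(ltnNge (m + i) m) leq_addr /= addKn.
  - move=> r x [h [n [c [qh ->]]]]; exists h, n, (fun i => r * c i); split => //.
    by rewrite mulr_sumr; apply: eq_bigr => i _; rewrite mulrA.
have IU : forall x, I x -> ~ x = 1.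
  move=> x [h [n [c [qh ->]]]] e; apply: (hS h) => //.
  by apply/in_SigmaP; exists n, c.
have UM : forall x y : R, x = 1 -> y = 1 -> x * y = 1 by move=> x y -> ->; rewrite mulr1.
have [M [hM [IM _]]] := @prime_avoid R I (fun x => x = 1) hI erefl UM IU.
exists M; split => // h qh i; apply: IM; exists h, i.+1, (fun j => if j == i then 1 else 0).
split => //; rewrite big_ord_recr /= eqxx mul1r big1 ?add0r // => j _.
by rewrite (ltn_eqF (ltn_ord j)) mul0r.
Qed.

Lemma part2 (R S : comNzRingType) (f : {rmorphism R -> S}) :
  QP S -> injective f -> integral_morphism f -> QP R.
Proof.
move=> hS finj hint q hq hqS g hg i.
have allint : forall b : {poly S}, integralOver (map_poly f) b.
  move=> b; apply: poly_integral => j; apply: (integral_of (A := @fullset R)); exact: hint.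
have hqI : is_ideal q by case: hq.
have [M [hM qM]] := content_prime hqI hqS.
have J0 : is_ideal (fun y : {poly S} => y = 0).
  split => //; split; first by move=> x y -> ->; rewrite addr0.
  by move=> r x ->; rewrite mulr0.
have [Q1 [hQ1 [_ eQ1]]] := @lying_over _ _ (map_poly f) _ q allint J0 hq
  (fun a (h : map_poly f a = 0) => eq_ind 0 q (let: conj h0 _ := hqI in h0) a
     (esym (map_inj_poly finj (rmorph0 f) (etrans h (esym (rmorph0 _)))))).
have hQ1I : is_ideal Q1 by case: hQ1.
have [Q2 [hQ2 [Q12 eQ2]]] := @lying_over _ _ (map_poly f) Q1 (PX M) allint hQ1I
  (PX_prime hM) (fun a h => qM a ((eQ1 a).1 h)).
pose N := fun s : S => Q2 s%:P.
have hN : is_prime_ideal N by apply: (contr_prime (polyC : {rmorphism S -> {poly S}})).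
have hQ2I : is_ideal Q2 by case: hQ2.
have Q2N : forall b, Q2 b -> PX N b.
  move=> b Qb; apply: (incomp (phi := map_poly f) (Q := Q2)) => //.
  - exact: PX_prime.
  - by apply: PX_sub.
  - move=> a ha j; rewrite /N coef_map -map_polyC; apply/eQ2.
    have hMI : is_ideal M by case: hM.
    by apply/PX_C => //; apply: (eQ2 a).1.
have disj : forall p, in_Sigma p -> ~ Q1 p.
  by move=> p hp Qp; apply: (PX_Sigma hN (Q2N _ (Q12 _ Qp))).
have := hS Q1 hQ1 disj (map_poly f g) ((eQ1 g).2 hg) i.
by rewrite coef_map -map_polyC => /eQ1.
Qed.

Section FieldConstr.
Local Open Scope quotient_scope.
Variables (S : comNzRingType) (Q1 : {poly S} -> Prop) (hQ1 : is_prime_ideal Q1).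

Definition kQ : {pred {poly S}} := fun p => `[< Q1 p >].

Lemma kQ_idealr : idealr_closed kQ.
Proof.
case: hQ1 => [[hQ0 [hQD hQM]] [hQ1n hQp]]; split.
- exact/asboolP.
- by apply/asboolP.
- move=> a u v /asboolP hu /asboolP hv; apply/asboolP; apply: hQD => //; exact: hQM.
Qed.

HB.instance Definition _ := isIdealr.Build {poly S} kQ kQ_idealr.

Lemma kQ_prime : prime_idealr_closed kQ.
Proof.
case: hQ1 => _ [_ Qp] u v /asboolP /Qp [] h; apply/orP; [left|right]; exact/asboolP.
Qed.

HB.instance Definition _ := isPrimeIdealrClosed.Build {poly S} kQ kQ_prime.

Definition EQ := {ideal_quot kQ}.
HB.instance Definition _ := GRing.ComNzRing.on EQ.

Definition Eunit : {pred EQ} := fun x => `[< exists y, y * x = 1 >].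
Definition Einv (x : EQ) : EQ :=
  match pselect (exists y, y * x = 1) with
  | left h => projT1 (cid h)
  | right _ => x
  end.

Lemma EmulVx : {in Eunit, left_inverse 1 Einv *%R}.
Proof.
move=> x /asboolP hx; rewrite /Einv; case: pselect => // h.
exact: (projT2 (cid h)).
Qed.

Lemma EunitPl : forall x y : EQ, y * x = 1 -> Eunit x.
Proof. by move=> x y h; apply/asboolP; exists y. Qed.

Lemma Einv_out : {in [predC Eunit], Einv =1 id}.
Proof.
move=> x; rewrite inE => /asboolPn hx; rewrite /Einv; case: pselect => // h.
Qed.

HB.instance Definition _ := GRing.ComNzRing_hasMulInverse.Build EQ EmulVx EunitPl Einv_out.

Lemma EQ_dom : GRing.integral_domain_axiom EQ.
Proof. move=> x y; exact: (@Quotient.rquot_IdomainAxiom _ kQ). Qed.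

HB.instance Definition _ := GRing.ComUnitRing_isIntegral.Build EQ EQ_dom.

Definition LF := {fraction EQ}.
HB.instance Definition _ := GRing.Field.on LF.

Definition iotaX : {poly S} -> LF := (@tofrac EQ) \o (\pi_EQ).

Lemma piE0 p : \pi_EQ p = 0 <-> Q1 p.
Proof.
have e := Quotient.idealrBE kQ p 0.
rewrite subr0 in e.
have e0 : \pi_EQ (0 : {poly S}) = 0 by rewrite rmorph0.
split.
- move=> h; apply/asboolP; change (p \in kQ); rewrite e; apply/eqP; exact: (etrans h (esym e0)).
- move=> h; rewrite -e0; apply/eqP; change (p == 0 %[mod {ideal_quot kQ}]); rewrite -e; exact/asboolP.
Qed.

HB.instance Definition _ := GRing.RMorphism.on iotaX.

Lemma iotaX_eq0 p : iotaX p = 0 <-> Q1 p.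
Proof.
rewrite /iotaX /=; split.
- by move/eqP; rewrite tofrac_eq0 => /eqP /piE0.
- by move/piE0 => ->; rewrite rmorph0.
Qed.

Definition io : S -> LF := iotaX \o polyC.
HB.instance Definition _ := GRing.RMorphism.on io.

Lemma io_eq0 s : io s = 0 <-> Q1 s%:P.
Proof. exact: iotaX_eq0. Qed.

Lemma io_poly (g : {poly S}) : iotaX g = \sum_(i < size g) io g`_i * iotaX 'X ^+ i.
Proof.
rewrite {1}(poly_sumC g) rmorph_sum; apply: eq_bigr => i _.
by rewrite rmorphM rmorphXn.
Qed.
End FieldConstr.

Section OpRing.
Variables (S L : comNzRingType) (iota : {rmorphism S -> L}) (A0 : S -> Prop).

Definition Nprop (phi : S -> L) :=
  (forall x y, phi (x + y) = phi x + phi y) /\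
  (forall a t, A0 a -> phi (a * t) = iota a * phi t).

Record NT := MkN { nf : S -> L; nP : Nprop nf }.

Lemma NT_eq (u v : NT) : nf u = nf v -> u = v.
Proof.
case: u => f1 p1; case: v => f2 p2 /= e; subst f2.
by rewrite (Prop_irrelevance p1 p2).
Qed.

HB.instance Definition _ := gen_eqMixin NT.
HB.instance Definition _ := gen_choiceMixin NT.

Lemma N0P : Nprop (fun _ => 0).
Proof. by split => *; rewrite ?addr0 ?mulr0. Qed.
Definition N0 := MkN N0P.

Lemma NaddP (u v : NT) : Nprop (fun s => nf u s + nf v s).
Proof.
case: u => f [f1 f2]; case: v => g [g1 g2]; split => /=.
- by move=> x y; rewrite f1 g1 addrACA.
- by move=> a t ha; rewrite f2 // g2 // mulrDr.
Qed.
Definition Nadd u v := MkN (NaddP u v).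

Lemma NoppP (u : NT) : Nprop (fun s => - nf u s).
Proof.
case: u => f [f1 f2]; split => /=.
- by move=> x y; rewrite f1 opprD.
- by move=> a t ha; rewrite f2 // mulrN.
Qed.
Definition Nopp u := MkN (NoppP u).

Lemma NaddA : associative Nadd.
Proof. by move=> x y z; apply: NT_eq; apply: funext => s /=; rewrite addrA. Qed.
Lemma NaddC : commutative Nadd.
Proof. by move=> x y; apply: NT_eq; apply: funext => s /=; rewrite addrC. Qed.
Lemma Nadd0 : left_id N0 Nadd.
Proof. by move=> x; apply: NT_eq; apply: funext => s /=; rewrite add0r. Qed.
Lemma NaddN : left_inverse N0 Nopp Nadd.
Proof. by move=> x; apply: NT_eq; apply: funext => s /=; rewrite addNr. Qed.

HB.instance Definition _ := GRing.isZmodule.Build NT NaddA NaddC Nadd0 NaddN.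

Lemma GfP (s : S) (u : NT) : Nprop (fun t => iota s * nf u t).
Proof.
case: u => f [f1 f2]; split => /=.
- by move=> x y; rewrite f1 mulrDr.
- by move=> a t ha; rewrite f2 // mulrCA.
Qed.
Definition Gf s u := MkN (GfP s u).

Lemma HfP (s : S) (u : NT) : Nprop (fun t => nf u (s * t)).
Proof.
case: u => f [f1 f2]; split => /=.
- by move=> x y; rewrite mulrDr f1.
- by move=> a t ha /=; rewrite mulrCA (f2 a).
Qed.
Definition Hf s u := MkN (HfP s u).

Definition addop (v : NT -> NT) := forall x y, v (x + y) = v x + v y.
Definition inC1 (v : NT -> NT) := addop v /\
  (forall s u, v (Gf s u) = Gf s (v u)) /\ (forall s u, v (Hf s u) = Hf s (v u)).
Definition inC2 (w : NT -> NT) := addop w /\ forall v, inC1 v -> forall u, w (v u) = v (w u).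

Lemma addop0 v : addop v -> v 0 = 0.
Proof. by move=> h; have := h 0 0; rewrite addr0 => e; apply: (addrI (v 0)); rewrite addr0 -e. Qed.

Lemma addopN v x : addop v -> v (- x) = - v x.
Proof.
move=> h; apply: (addrI (v x)); rewrite -h !subrr; exact: addop0.
Qed.

Lemma Gf_inC1 s : inC1 (Gf s).
Proof.
split; last split.
- by move=> x y; apply: NT_eq; apply: funext => t /=; rewrite mulrDr.
- by move=> s' u; apply: NT_eq; apply: funext => t /=; rewrite mulrCA.
- by move=> s' u; apply: NT_eq; apply: funext => t /=.
Qed.

Lemma Hf_inC1 s : inC1 (Hf s).
Proof.
split; last split.
- by move=> x y; apply: NT_eq; apply: funext => t /=.
- by move=> s' u; apply: NT_eq; apply: funext => t /=.
- by move=> s' u; apply: NT_eq; apply: funext => t /=; rewrite mulrCA.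
Qed.

Record TT := MkT { tf : NT -> NT; tP : inC2 tf }.

Lemma TT_eq (u v : TT) : tf u = tf v -> u = v.
Proof.
case: u => f1 p1; case: v => f2 p2 /= e; subst f2.
by rewrite (Prop_irrelevance p1 p2).
Qed.

HB.instance Definition _ := gen_eqMixin TT.
HB.instance Definition _ := gen_choiceMixin TT.

Lemma T0P : inC2 (fun _ => 0).
Proof.
split; first by move=> x y; rewrite addr0.
by move=> v [hv _] u; rewrite addop0.
Qed.
Definition T0 := MkT T0P.

Lemma TaddP (w1 w2 : TT) : inC2 (fun u => tf w1 u + tf w2 u).
Proof.
case: w1 => f [f1 f2]; case: w2 => g [g1 g2]; split => /=.
- by move=> x y; rewrite f1 g1 addrACA.
- by move=> v hv u; rewrite f2 // g2 //; case: hv => hv _; rewrite hv.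
Qed.
Definition Tadd w1 w2 := MkT (TaddP w1 w2).

Lemma ToppP (w : TT) : inC2 (fun u => - tf w u).
Proof.
case: w => f [f1 f2]; split => /=.
- by move=> x y; rewrite f1 opprD.
- by move=> v hv u; rewrite f2 //; case: hv => hv _; rewrite addopN.
Qed.
Definition Topp w := MkT (ToppP w).

Lemma TaddA : associative Tadd.
Proof. by move=> x y z; apply: TT_eq; apply: funext => s /=; rewrite addrA. Qed.
Lemma TaddC : commutative Tadd.
Proof. by move=> x y; apply: TT_eq; apply: funext => s /=; rewrite addrC. Qed.
Lemma Tadd0 : left_id T0 Tadd.
Proof. by move=> x; apply: TT_eq; apply: funext => s /=; rewrite add0r. Qed.
Lemma TaddN : left_inverse T0 Topp Tadd.
Proof. by move=> x; apply: TT_eq; apply: funext => s /=; rewrite addNr. Qed.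

HB.instance Definition _ := GRing.isZmodule.Build TT TaddA TaddC Tadd0 TaddN.

Lemma T1P : inC2 id.
Proof. by split. Qed.
Definition T1 := MkT T1P.

Lemma TmulP (w1 w2 : TT) : inC2 (fun u => tf w1 (tf w2 u)).
Proof.
case: w1 => f [f1 f2]; case: w2 => g [g1 g2]; split => /=.
- by move=> x y; rewrite g1 f1.
- by move=> v hv u; rewrite g2 // f2.
Qed.
Definition Tmul w1 w2 := MkT (TmulP w1 w2).

Lemma TmulA : associative Tmul.
Proof. by move=> x y z; apply: TT_eq. Qed.
Lemma TmulC : commutative Tmul.
Proof.
move=> [f [f1 f2]] [g [g1 g2]]; apply: TT_eq; apply: funext => u /=.
have hg : inC1 g.
  split => //; split => s u'; rewrite g2 //; [exact: Gf_inC1 | exact: Hf_inC1].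
by rewrite f2.
Qed.
Lemma Tmul1 : left_id T1 Tmul.
Proof. by move=> x; apply: TT_eq. Qed.
Lemma TmulDl : left_distributive Tmul Tadd.
Proof. by move=> x y z; apply: TT_eq. Qed.

HB.instance Definition _ := GRing.Zmodule_isComPzRing.Build TT TmulA TmulC Tmul1 TmulDl.

Lemma Gt_inC2 s : inC2 (Gf s).
Proof.
split; first by case: (Gf_inC1 s).
by move=> v [_ [hG _]] u; rewrite hG.
Qed.
Definition Gt s : TT := MkT (Gt_inC2 s).

Lemma Ht_inC2 s : inC2 (Hf s).
Proof.
split; first by case: (Hf_inC1 s).
by move=> v [_ [_ hH]] u; rewrite hH.
Qed.
Definition Ht s : TT := MkT (Ht_inC2 s).

Lemma Gt_rmorph : rmorph_on (@fullset S) Gt.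
Proof.
split.
  apply: TT_eq; apply: funext => u; apply: NT_eq; apply: funext => t /=.
  by rewrite rmorph1 mul1r.
move=> x y _ _; split.
- apply: TT_eq; apply: funext => u; apply: NT_eq; apply: funext => t /=.
  by rewrite rmorphD mulrDl.
- apply: TT_eq; apply: funext => u; apply: NT_eq; apply: funext => t /=.
  by rewrite rmorphM mulrA.
Qed.

Lemma Ht_rmorph : rmorph_on (@fullset S) Ht.
Proof.
split.
  by apply: TT_eq; apply: funext => u; apply: NT_eq; apply: funext => t /=; rewrite mul1r.
move=> x y _ _; split.
- apply: TT_eq; apply: funext => u; apply: NT_eq; apply: funext => t /=.
  by case: u => f [f1 f2] /=; rewrite mulrDl f1.
- apply: TT_eq; apply: funext => u; apply: NT_eq; apply: funext => t /=.
  by rewrite mulrCA mulrA.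
Qed.

Lemma GH_agree a : A0 a -> Gt a = Ht a.
Proof.
move=> ha; apply: TT_eq; apply: funext => u; apply: NT_eq; apply: funext => t /=.
by case: u => f [f1 f2] /=; rewrite f2.
Qed.

Lemma epi_linear :
  (forall (T : comPzRingType) (g h : S -> T), rmorph_on (@fullset S) g ->
     rmorph_on (@fullset S) h -> (forall a, A0 a -> g a = h a) -> forall c, g c = h c) ->
  forall phi, Nprop phi -> forall c, phi c = iota c * phi 1.
Proof.
move=> epi phi hphi c.
have e := epi TT Gt Ht Gt_rmorph Ht_rmorph GH_agree c.
have := congr1 (fun w => nf (tf w (MkN hphi)) 1) e => /= ->.
by rewrite mulr1.
Qed.

End OpRing.

Section Heavy.
Variables (S : comNzRingType) (A0 : S -> Prop).
Hypotheses (A00 : A0 0) (A01 : A0 1)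
  (A0D : forall x y, A0 x -> A0 y -> A0 (x + y))
  (A0N : forall x, A0 x -> A0 (- x))
  (A0M : forall x y, A0 x -> A0 y -> A0 (x * y)).
Variables (Q1 : {poly S} -> Prop) (hQ1 : is_prime_ideal Q1).

Local Notation L := (LF hQ1).
Local Notation io := (io hQ1).

Lemma ioM x y : io (x * y) = io x * io y. Proof. exact: rmorphM. Qed.
Lemma ioD x y : io (x + y) = io x + io y. Proof. exact: rmorphD. Qed.
Lemma ioB x y : io (x - y) = io x - io y. Proof. exact: rmorphB. Qed.
Lemma io1 : io 1 = 1. Proof. exact: rmorph1. Qed.
Lemma io0 : io 0 = 0. Proof. exact: rmorph0. Qed.

Definition K0 (y : L) := exists a b, A0 a /\ A0 b /\ io b != 0 /\ y = io a / io b.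

Lemma K0_io a : A0 a -> K0 (io a).
Proof. by move=> ha; exists a, 1; rewrite rmorph1 divr1 oner_neq0. Qed.

Lemma K0_0 : K0 0. Proof. by rewrite -(rmorph0 io); apply: K0_io. Qed.
Lemma K0_1 : K0 1. Proof. by rewrite -(rmorph1 io); apply: K0_io. Qed.

Lemma K0_add x y : K0 x -> K0 y -> K0 (x + y).
Proof.
move=> [a1 [b1 [ha1 [hb1 [nb1 ->]]]]] [a2 [b2 [ha2 [hb2 [nb2 ->]]]]].
exists (a1 * b2 + a2 * b1), (b1 * b2).
split; first by apply: A0D; apply: A0M.
split; first exact: A0M.
split; first by rewrite rmorphM; exact: (mulf_neq0 nb1 nb2).
rewrite rmorphD !rmorphM; exact: (addf_div (io a1) (io a2) nb1 nb2).
Qed.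
Lemma K0_opp x : K0 x -> K0 (- x).
Proof.
move=> [a [b [ha [hb [nb ->]]]]]; exists (- a), b.
split; first exact: A0N.
split => //; split => //.
by rewrite rmorphN mulNr.
Qed.

Lemma K0_mul x y : K0 x -> K0 y -> K0 (x * y).
Proof.
move=> [a1 [b1 [ha1 [hb1 [nb1 ->]]]]] [a2 [b2 [ha2 [hb2 [nb2 ->]]]]].
exists (a1 * a2), (b1 * b2); split; first exact: A0M.
split; first exact: A0M.
split; first by rewrite rmorphM; exact: (mulf_neq0 nb1 nb2).
by rewrite !rmorphM mulf_div.
Qed.

Lemma K0_inv x : K0 x -> K0 x^-1.
Proof.
move=> [a [b [ha [hb [nb ->]]]]].
case: (eqVneq (io a) 0) => [ea|na].
  by rewrite ea mul0r invr0; apply: K0_0.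
exists b, a; split => //; split => //; split => //.
by rewrite invf_div.
Qed.


Lemma K0_sub x y : K0 x -> K0 y -> K0 (x - y).
Proof. by move=> hx hy; apply: K0_add => //; apply: K0_opp. Qed.

Section Functional.
Variable d : L.
Hypothesis nd : ~ K0 d.

Definition Wprop (W : L -> Prop) := (forall k w, K0 k -> W w -> W (k * w)) /\ (forall x y, W x -> W y -> W (x + y)) /\ ~ W 1.

Lemma functional : exists nu : L -> L, (forall x y, nu (x + y) = nu x + nu y) /\ (forall k y, K0 k -> nu (k * y) = k * nu y) /\ nu 1 = 1 /\ nu d = 0.
Proof.
pose W0 := fun y => exists k, K0 k /\ y = k * d.
have [] := @zorn_max L Wprop W0.
- by exists d, 1; split; [exact: K0_1 | rewrite mul1r].
- split; first by move=> k w hk [k' [hk' ->]]; exists (k * k'); split; [exact: K0_mul | rewrite mulrA].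
  split; first by move=> x y [k1 [h1 ->]] [k2 [h2 ->]]; exists (k1 + k2); split; [exact: K0_add | rewrite mulrDl].
  move=> [k [hk e]].
  have nk : k != 0 by apply/eqP => k0; move: e; rewrite k0 mul0r; apply/eqP; exact: oner_neq0.
  apply: nd; have -> : d = k^-1 by rewrite -[k^-1]mulr1 e mulrA mulVf // mul1r.
  exact: K0_inv.
- move=> F FP [X0 FX0] Ftot; split.
    by move=> k w hk [X [FX Xw]]; exists X; split => //; case: (FP X FX) => [[h _] _]; apply: h.
  split.
    move=> x y [X [FX Xx]] [Y [FY Yy]].
    case: (Ftot X Y FX FY) => sub.
    + exists Y; split => //; case: (FP Y FY) => [[_ [h _]] _]; apply: h => //; exact: sub.
    + exists X; split => //; case: (FP X FX) => [[_ [h _]] _]; apply: h => //; exact: sub.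
  by move=> [X [FX X1]]; case: (FP X FX) => [[_ [_ h]] _]; apply: h.
move=> W [[Wsc [Wad W1]] [W0W maxW]].
have Wz : W 0 by apply: W0W; exists 0; split; [exact: K0_0 | rewrite mul0r].
have key : forall y, exists k, K0 k /\ W (y - k).
  move=> y.
  case: (pselect (exists w t, W w /\ K0 t /\ 1 = w + t * y)) => [[w [t [Ww [Kt e]]]]|hn].
  - have nt : t != 0.
      by apply/eqP => t0; apply: W1; rewrite e t0 mul0r addr0.
    exists t^-1; split; first exact: K0_inv.
    have -> : y - t^-1 = (- t^-1) * w.
      have ew : w = 1 - t * y by rewrite e addrK.
      by rewrite ew mulrBr mulr1 mulNr (opprK (t^-1 * (t * y))) (mulrA t^-1 t y) (mulVf nt) (mul1r y) (addrC y).
    by apply: Wsc => //; apply: K0_opp; apply: K0_inv.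
  - pose W' := fun z => exists w t, W w /\ K0 t /\ z = w + t * y.
    have hW' : Wprop W'.
      split.
        move=> k z hk [w [t [Ww [Kt ->]]]]; exists (k * w), (k * t); split; first exact: Wsc.
        by split; [exact: K0_mul | rewrite mulrDr mulrA].
      split.
        move=> z1 z2 [w1 [t1 [W1' [K1 ->]]]] [w2 [t2 [W2' [K2 ->]]]].
        exists (w1 + w2), (t1 + t2); split; first exact: Wad.
        by split; [exact: K0_add | rewrite mulrDl addrACA].
      move=> [w [t [Ww [Kt e]]]]; apply: hn; by exists w, t.
    have : W y.
      apply: (maxW W' hW'); first by move=> z Wz'; exists z, 0; split => //; split; [exact: K0_0 | rewrite mul0r addr0].
      by exists 0, 1; split => //; split; [exact: K0_1 | rewrite mul1r add0r].
    by move=> Wy; exists 0; split; [exact: K0_0 | rewrite subr0].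
have uniq : forall y k1 k2, K0 k1 -> K0 k2 -> W (y - k1) -> W (y - k2) -> k1 = k2.
  move=> y k1 k2 K1 K2 W1' W2'.
  have Wd : W (k1 - k2).
    have -> : k1 - k2 = (y - k2) + (-1) * (y - k1).
      by rewrite mulN1r opprB [RHS]addrC addrA subrK.
    by apply: Wad => //; apply: Wsc => //; apply: K0_opp; exact: K0_1.
  case: (eqVneq (k1 - k2) 0) => [e0|ne'].
    by apply/eqP; rewrite -subr_eq0; apply/eqP.
  exfalso; apply: W1.
  rewrite -(mulVf ne'); apply: Wsc => //; apply: K0_inv; exact: K0_sub.
pose nu := fun y => projT1 (cid (key y)).
have nuK y : K0 (nu y) /\ W (y - nu y) := projT2 (cid (key y)).
exists nu; split; last split; last split.
- move=> x y; case: (nuK x) => Kx Wx; case: (nuK y) => Ky Wy; case: (nuK (x + y)) => Kxy Wxy.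
  apply: (uniq (x + y)) => //; first exact: K0_add.
  have -> : x + y - (nu x + nu y) = (x - nu x) + (y - nu y) by rewrite opprD addrACA.
  exact: Wad.
- move=> k y hk; case: (nuK y) => Ky Wy; case: (nuK (k * y)) => Kky Wky.
  apply: (uniq (k * y)) => //; first exact: K0_mul.
  by rewrite -mulrBr; apply: Wsc.
- case: (nuK 1) => K1 W1'; apply: (uniq 1) => //; first exact: K0_1.
  by rewrite subrr.
- case: (nuK d) => Kd Wd; apply: (uniq d) => //; first exact: K0_0.
  rewrite subr0; apply: W0W; exists 1; split; [exact: K0_1 | by rewrite mul1r].
Qed.
End Functional.

Lemma heavy :
  (forall (T : comPzRingType) (g h : S -> T), rmorph_on (@fullset S) g ->
     rmorph_on (@fullset S) h -> (forall a, A0 a -> g a = h a) -> forall c, g c = h c) ->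
  (forall h, Q1 h -> (forall i, A0 h`_i) -> forall i, Q1 (h`_i)%:P) ->
  forall g, Q1 g -> forall i, Q1 (g`_i)%:P.
Proof.
move=> epi hstar g hg i; apply: contrapT => ngi.
have hQI : is_ideal Q1 by case: hQ1.
have [c nc] : exists c, ~ K0 (io c).
  apply: contrapT => hn.
  have allK : forall s, K0 (io s) by move=> s; apply: contrapT => h; apply: hn; exists s.
  have cd : forall m, exists b (h : nat -> S), A0 b /\ io b != 0 /\ (forall n, A0 (h n)) /\
      forall n, (n < m)%N -> io (h n) = io b * io g`_n.
    elim => [|m [b [h [hb [nb [hh eh]]]]]].
      exists 1, (fun _ => 0); split => //; split; first by rewrite io1 oner_neq0.
      by split.
    have [a [be [ha [hbe [nbe e]]]]] := allK g`_m.
    exists (b * be), (fun n => if (n < m)%N then h n * be else a * b).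
    split; first exact: A0M.
    split; first by rewrite ioM; exact: (mulf_neq0 nb nbe).
    split; first by move=> n; case: ifP => _; apply: A0M.
    move=> n; rewrite ltnS leq_eqVlt => /orP [/eqP ->|lt].
    - rewrite ltnn !ioM e -mulrA (mulrCA (io be) (io a) (io be)^-1) (mulfV nbe) mulr1.
      by rewrite mulrC.
    - by rewrite lt !ioM (eh n lt) mulrAC.
  have [b [h [hb [nb [hh eh]]]]] := cd (size g).
  pose hp := \poly_(n < size g) h n.
  have Qdiff : Q1 (hp - b%:P * g).
    apply: (PX_sub (P := fun s => Q1 s%:P)) => // n.
    rewrite coefB coef_poly coefCM; apply/io_eq0; rewrite ioB ioM.
    case: ifP => lt; first by rewrite (eh n lt) subrr.
    have le : (size g <= n)%N by rewrite leqNgt lt.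
    by rewrite (nth_default 0 le) io0 mulr0 subr0.
  have Qbg : Q1 (b%:P * g) by case: hQI => _ [_ hM]; apply: hM.
  have Qhp : Q1 hp.
    by rewrite -(subrK (b%:P * g) hp); case: hQI => _ [hD _]; apply: hD.
  have hpA : forall n, A0 hp`_n by move=> n; rewrite coef_poly; case: ifP.
  have := hstar hp Qhp hpA i; rewrite coef_poly; case: ifP => lt.
  - move/(io_eq0 hQ1); rewrite (eh i lt) => /eqP; rewrite mulf_eq0 (negbTE nb) /= => /eqP /(io_eq0 hQ1).
    exact: ngi.
  - move=> _; apply: ngi; rewrite nth_default; last by rewrite leqNgt lt.
    by case: hQI.
have [nu [nuD [nuK [nu1 nud]]]] := functional nc.
pose phi := fun s => nu (io s).
have hphi : Nprop io A0 phi.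
  split; first by move=> x y; rewrite /phi rmorphD nuD.
  by move=> a t ha; rewrite /phi rmorphM nuK //; apply: K0_io.
have := epi_linear epi hphi c; rewrite /phi nud rmorph1 nu1 mulr1 => e.
by apply: nc; rewrite -e; exact: K0_0.
Qed.
End Heavy.

Lemma lift_poly (R S : comNzRingType) (f : {rmorphism R -> S}) (h : {poly S}) :
  (forall i, exists r, h`_i = f r) -> exists h' : {poly R}, map_poly f h' = h.
Proof.
move=> hA; pose r := fun i => projT1 (cid (hA i)).
have er : forall i, h`_i = f (r i) by move=> i; exact: (projT2 (cid (hA i))).
exists (\poly_(i < size h) r i); apply/polyP => i.
rewrite coef_map coef_poly; case: ifP => lt; first by rewrite er.
transitivity (0 : S); first exact: rmorph0.
by rewrite nth_default // leqNgt lt.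
Qed.

Lemma QP_contr (R S : comNzRingType) (f : {rmorphism R -> S}) (Q1 : {poly S} -> Prop) :
  QP R -> is_prime_ideal Q1 -> (forall p, in_Sigma p -> ~ Q1 p) ->
  forall a, Q1 (map_poly f a) -> forall i, Q1 (f a`_i)%:P.
Proof.
move=> hR hQ1 hS a ha i.
have hq := contr_prime (map_poly f) hQ1.
rewrite -map_polyC; exact: (hR _ hq (contr_Sigma hS) a ha i).
Qed.

Lemma part1_flat (R S : comNzRingType) (f : {rmorphism R -> S}) :
  QP R -> flat_epimorphism f -> QP S.
Proof.
move=> hR [_ hepi] Q1 hQ1 hS.
apply: (@heavy S (fun s => exists r, s = f r)).
- by exists 0; rewrite rmorph0.
- by exists 1; rewrite rmorph1.
- by move=> x y [a ->] [b ->]; exists (a + b); rewrite rmorphD.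
- by move=> x [a ->]; exists (- a); rewrite rmorphN.
- by move=> x y [a ->] [b ->]; exists (a * b); rewrite rmorphM.
- exact: hQ1.
- move=> T g h rg rh agr c; apply: (hepi T g h rg rh) => // a _.
  by apply: agr; exists a.
- move=> h Qh hA i.
  have [h' eh] := lift_poly (f := f) hA.
  rewrite -eh coef_map; apply: (QP_contr hR hQ1 hS).
  by rewrite eh.
Qed.

Lemma part3 (R S : comNzRingType) (f : {rmorphism R -> S}) :
  QP R -> quasi_prufer_ext f -> QP S.
Proof.
move=> hR [finj [A' [[A1 [AB AM]] [Af [intA pruf]]]]] Q1 hQ1 hS.
have A0' : A' 0 by rewrite -(subrr 1); apply: AB.
have AN : forall x, A' x -> A' (- x) by move=> x hx; rewrite -sub0r; apply: AB.
have AD : forall x y, A' x -> A' y -> A' (x + y).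
  by move=> x y hx hy; rewrite -(opprK y); apply: AB => //; apply: AN.
have hsub : is_subring (@fullset S) by [].
have [_ hepi] := pruf (@fullset S) hsub (fun _ _ => I).
apply: (@heavy S A') => //.
- move=> T g h rg rh agr c; exact: (hepi T g h rg rh agr c I).
- move=> h Qh hA i.
  pose P' := fun s : S => Q1 s%:P.
  have hP' : is_prime_ideal P' by apply: (contr_prime (polyC : {rmorphism S -> {poly S}})).
  have hI1 : is_ideal Q1 by case: hQ1.
  suff : PX P' h by apply.
  apply: (incomp (phi := map_poly f) (Q := Q1)) => //.
  + exact: PX_prime.
  + by apply: PX_sub.
  + move=> a ha j; rewrite /P' coef_map; exact: (QP_contr hR hQ1 hS).
  + apply: poly_integral => j; apply: (integral_of (A := @fullset R)); exact: intA.
Qed.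

Theorem mainTheorem17 (R S : comNzRingType) (f : {rmorphism R -> S}) :
  (quasi_pruferian R -> (integral_morphism f \/ flat_epimorphism f) ->
     quasi_pruferian S) /\
  (quasi_pruferian S -> injective f -> integral_morphism f ->
     quasi_pruferian R) /\
  (quasi_pruferian R -> quasi_prufer_ext f -> quasi_pruferian S).
Proof.
split; last split.
- move=> /qpP hR [hi|hf]; apply/qpP; [exact: part1_int hR hi | exact: part1_flat hR hf].
- move=> /qpP hS finj hi; apply/qpP; exact: part2 hS finj hi.
- move=> /qpP hR hq; apply/qpP; exact: part3 hR hq.
Qed.
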